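(* For $d\geq 0$ and $n\geq 1$ let $\sigma_d(n)=\sum_{\ell\mid n}\ell^d$. For $n\geq 3$ define \[ D^{\sigma}(n):=\begin{cases} 2n\log_{9/8}(3), & n\equiv 0\pmod 3,\\ (2n+1)\log_{9/8}(3)-\log_{9/8}(n+2), & n\equiv 1\pmod 3,\\ \log_{9/8}(2)+(n+1)\log_{9/8}(3), & n\equiv 2\pmod 3,\ n\neq 5,\\ \log_{9/8}(3888), & n=5. \end{cases} \] Let $n\geq 3$ and let $d$ be an integer with $d>D^{\sigma}(n)$. Then \[ \frac{\bigl(q^{\sigma_d}(n)\bigr)^2}{q^{\sigma_d}(n-1)\,q^{\sigma_d}(n+1)}<1 \quad\text{if and only if}\quad n\equiv 1\pmod 3 . \]
   Context: For a double sequence $\{g_d(n)\}_{d\geq 0,n\geq 1}$ of positive reals, the numbers $q^{g_d}(n)$ ($n\geq 0$) are defined as the coefficients of the power series \[ \sum_{n=0}^{\infty} q^{g_d}(n)\,t^n := \frac{1}{1-\sum_{n=1}^{\infty} g_d(n)\,t^n}. \] Here $g_d=\sigma_d$, i.e. $\sum_n q^{\sigma_d}(n)t^n = 1/(1-\sum_{n\ge1} \sigma_d(n) t^n)$. $\log_{9/8}$ denotes the logarithm to base $9/8$. *)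

(* Defs.v *)
From Stdlib Require Import Reals Lra Lia Arith List.
Open Scope R_scope.

Definition sigmad (d n : nat) : R :=
  fold_right Rplus 0
    (map (fun l => INR l ^ d)
       (filter (fun l => Nat.eqb (n mod l) 0) (seq 1 n))).

(* Coefficients q^g(n) of 1/(1 - sum_{n>=1} g(n) t^n):
   q(0) = 1, q(n) = sum_{k=1}^{n} g(k) q(n-k). *)
Fixpoint qlist (g : nat -> R) (n : nat) : list R :=
  (* returns [q(n); q(n-1); ...; q(0)] *)
  match n with
  | O => 1 :: nil
  | S m =>
      let l := qlist g m in
      (* l = [q(m); ...; q(0)], so nth (k-1) l = q(m - (k-1)) = q(n-k) *)
      fold_right Rplus 0
        (map (fun k => g k * nth (k - 1) l 0) (seq 1 n)) :: l
  end.

Definition qcoef (g : nat -> R) (n : nat) : R := hd 0 (qlist g n).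

Definition log98 (x : R) : R := ln x / ln (9/8).

Definition Dsigma (n : nat) : R :=
  if Nat.eqb (n mod 3) 0 then 2 * INR n * log98 3
  else if Nat.eqb (n mod 3) 1 then
    (2 * INR n + 1) * log98 3 - log98 (INR n + 2)
  else if Nat.eqb n 5 then log98 3888
  else log98 2 + (INR n + 1) * log98 3.

(* Main.v *)
Require Import Defs.
From Stdlib Require Import Reals Lra Lia Psatz Arith List.
Open Scope nat_scope.


Fixpoint A (j : nat) : nat :=
  match j with
  | 0 => 1 | 1 => 1 | 2 => 2 | 3 => 3 | 4 => 4
  | S (S (S i)) => 3 * A i
  end.

Lemma A_step : forall i, (2 <= i)%nat -> A (i + 3) = (3 * A i)%nat.
Proof.
  intros i Hi. destruct i as [|[|i]]; try lia.
  replace (S (S i) + 3)%nat with (S (S (S (S (S i)))))%nat by lia. reflexivity.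
Qed.

Lemma A_pos : forall j, (1 <= A j)%nat.
Proof.
  intro j. induction j as [j IH] using lt_wf_ind.
  destruct j as [|[|[|[|[|j]]]]]; simpl; try lia.
  assert (H := IH (S (S j)) ltac:(lia)). simpl in H. lia.
Qed.

Lemma A_3m : forall m, A (3*m) = 3^m.
Proof.
  induction m. reflexivity.
  destruct m. reflexivity.
  replace (3 * S (S m))%nat with (3 * S m + 3)%nat by lia.
  rewrite A_step by lia. rewrite IHm. simpl. lia.
Qed.

Lemma A_3m2 : forall m, A (3*m+2) = (2*3^m)%nat.
Proof.
  induction m. reflexivity.
  replace (3 * S m + 2)%nat with ((3 * m + 2) + 3)%nat by lia.
  rewrite A_step by lia. rewrite IHm. simpl. lia.
Qed.

Lemma A_3m4 : forall m, A (3*m+4) = (4*3^m)%nat.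
Proof.
  induction m. reflexivity.
  replace (3 * S m + 4)%nat with ((3 * m + 4) + 3)%nat by lia.
  rewrite A_step by lia. rewrite IHm. simpl. lia.
Qed.

Lemma A_super : forall a b, (A a * A b <= A (a + b))%nat.
Proof.
  intro a. induction a as [a IHa] using lt_wf_ind. intro b.
  destruct (le_lt_dec 5 a) as [Ha|Ha].
  - replace a with ((a-3)+3)%nat by lia. rewrite A_step by lia.
    replace (a - 3 + 3 + b)%nat with ((a - 3 + b) + 3)%nat by lia.
    rewrite A_step by lia. specialize (IHa (a-3)%nat ltac:(lia) b). lia.
  - clear IHa. revert a Ha. induction b as [b IHb] using lt_wf_ind. intros a Ha.
    destruct (le_lt_dec 5 b) as [Hb|Hb].
    + replace b with ((b-3)+3)%nat by lia. rewrite A_step by lia.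
      replace (a + (b - 3 + 3))%nat with ((a + (b - 3)) + 3)%nat by lia.
      rewrite A_step by lia. specialize (IHb (b-3)%nat ltac:(lia) a Ha). lia.
    + destruct a as [|[|[|[|[|a]]]]]; try lia;
      destruct b as [|[|[|[|[|b]]]]]; try lia; simpl; lia.
Qed.

Lemma A_big : forall k, (5 <= k)%nat -> (6 * k <= 5 * A k)%nat.
Proof.
  intro k. induction k as [k IH] using lt_wf_ind. intro Hk.
  destruct (le_lt_dec 8 k) as [H8|H8].
  - replace k with ((k-3)+3)%nat by lia. rewrite A_step by lia.
    specialize (IH (k-3)%nat ltac:(lia) ltac:(lia)). lia.
  - destruct k as [|[|[|[|[|[|[|[|k]]]]]]]]; try lia; simpl; lia.
Qed.

Definition optb (j k : nat) : bool := Nat.eqb (k * A (j - k)) (A j).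

Lemma opt_period : forall j k, (1 <= k <= 4)%nat -> (k + 2 <= j)%nat ->
  (k * A (j + 3 - k) = 3 * (k * A (j - k)))%nat /\ A (j+3) = (3 * A j)%nat.
Proof.
  intros j k Hk Hj. split.
  - replace (j + 3 - k)%nat with ((j - k) + 3)%nat by lia. rewrite A_step by lia. lia.
  - apply A_step. lia.
Qed.

Lemma F2_small : forall j k, (1 <= k <= 4)%nat -> (k <= j)%nat ->
  (k * A (j - k) = A j \/ 9 * (k * A (j - k)) <= 8 * A j)%nat.
Proof.
  intro j. induction j as [j IH] using lt_wf_ind. intros k Hk Hj.
  destruct (le_lt_dec (k+5) j) as [H|H].
  - destruct (opt_period (j-3) k Hk ltac:(lia)) as [E1 E2].
    replace (j - 3 + 3)%nat with j in * by lia.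
    replace (j - 3 + 3 - k)%nat with (j - k)%nat in E1 by lia.
    rewrite E1, E2. destruct (IH (j-3)%nat ltac:(lia) k Hk ltac:(lia)); lia.
  - destruct k as [|[|[|[|[|k]]]]]; try lia;
    (destruct j as [|[|[|[|[|[|[|[|[|j]]]]]]]]]; try lia; simpl; lia).
Qed.

Lemma F2 : forall j k, (1 <= k <= j)%nat ->
  (k * A (j - k) = A j \/ 9 * (k * A (j - k)) <= 8 * A j)%nat.
Proof.
  intros j k Hk. destruct (le_lt_dec 5 k) as [H5|H5].
  - right. pose proof (A_big k H5). pose proof (A_super k (j-k)).
    replace (k + (j - k))%nat with j in H0 by lia.
    pose proof (A_pos (j-k)).
    assert (6 * k * A (j-k) <= 5 * A k * A (j-k))%nat by (apply Nat.mul_le_mono_r; lia).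
    nia.
  - apply F2_small; lia.
Qed.

Lemma A_incr : forall i, (1 <= i)%nat -> (A i < A (S i))%nat.
Proof.
  intro i. induction i as [i IH] using lt_wf_ind. intro Hi.
  destruct (le_lt_dec 5 i) as [H|H].
  - replace i with ((i-3)+3)%nat by lia. rewrite A_step by lia.
    replace (S (i - 3 + 3)) with ((i-2)+3)%nat by lia. rewrite A_step by lia.
    replace (i-2)%nat with (S (i-3)) by lia. specialize (IH (i-3)%nat ltac:(lia) ltac:(lia)). lia.
  - destruct i as [|[|[|[|[|i]]]]]; try lia; simpl; lia.
Qed.

Lemma opt_ge2 : forall j k, (2 <= j)%nat -> (1 <= k <= j)%nat -> optb j k = true -> (2 <= k)%nat.
Proof.
  intros j k Hj Hk Ho. destruct (Nat.eq_dec k 1); [|lia]. subst.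
  unfold optb in Ho. apply Nat.eqb_eq in Ho.
  pose proof (A_incr (j-1) ltac:(lia)). replace (S (j-1)) with j in H by lia. lia.
Qed.

Open Scope R_scope.

Definition sumR (f : nat -> R) (l : list nat) : R := fold_right Rplus 0 (map f l).

Lemma sumR_app : forall f l1 l2, sumR f (l1 ++ l2) = sumR f l1 + sumR f l2.
Proof. intros. unfold sumR. rewrite map_app, fold_right_app.
  induction l1; simpl. lra. rewrite IHl1. unfold sumR. lra. Qed.

Lemma sumR_ext : forall f g l, (forall x, In x l -> f x = g x) -> sumR f l = sumR g l.
Proof. intros f g l H. induction l; simpl. reflexivity. unfold sumR in *; simpl.
  rewrite H by (left; auto). rewrite IHl. auto. intros; apply H; right; auto. Qed.

Lemma sumR_le : forall f g l, (forall x, In x l -> f x <= g x) -> sumR f l <= sumR g l.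
Proof. intros f g l H. induction l; unfold sumR in *; simpl. lra.
  assert (f a <= g a) by (apply H; left; auto).
  assert (fold_right Rplus 0 (map f l) <= fold_right Rplus 0 (map g l)) by (apply IHl; intros; apply H; right; auto).
  lra. Qed.

Lemma sumR_plus : forall f g l, sumR (fun x => f x + g x) l = sumR f l + sumR g l.
Proof. intros. induction l; unfold sumR in *; simpl. lra. rewrite IHl. lra. Qed.

Lemma sumR_scal : forall a f l, sumR (fun x => a * f x) l = a * sumR f l.
Proof. intros. induction l; unfold sumR in *; simpl. lra. rewrite IHl. lra. Qed.

Lemma sumR_nonneg : forall f l, (forall x, In x l -> 0 <= f x) -> 0 <= sumR f l.
Proof. intros f l H. replace 0 with (sumR (fun _ => 0) l).
  apply sumR_le; auto. induction l; unfold sumR in *; simpl; auto. rewrite IHl. lra.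
  intros; apply H; right; auto. Qed.

Lemma sumR_zero : forall f l, (forall x, In x l -> f x = 0) -> sumR f l = 0.
Proof. intros f l H. induction l; unfold sumR in *; simpl; auto. rewrite H by (left; auto).
  rewrite IHl. lra. intros; apply H; right; auto. Qed.

Definition c (j : nat) : R :=
  if Nat.eqb j 1 then 1 else
  match (j mod 3)%nat with
  | 0%nat => 1
  | 1%nat => INR (j/3) * (INR (j/3) + 3) / 2
  | _ => INR (j/3) + 1
  end.

Lemma divmod3 : forall m r, (r < 3)%nat -> ((3*m+r)/3 = m /\ (3*m+r) mod 3 = r)%nat.
Proof. intros. split. symmetry; apply (Nat.div_unique _ _ _ r); lia.
  symmetry; apply (Nat.mod_unique _ _ m); lia. Qed.

Lemma c_0 : forall m, c (3*m) = 1.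
Proof. intro m. unfold c. destruct (divmod3 m 0 ltac:(lia)) as [_ E].
  rewrite Nat.add_0_r in E. rewrite E. destruct (Nat.eqb_spec (3*m) 1); lia || reflexivity. Qed.

Lemma c_2 : forall m, c (3*m+2) = INR m + 1.
Proof. intro m. unfold c. destruct (divmod3 m 2 ltac:(lia)) as [E1 E].
  rewrite E, E1. destruct (Nat.eqb_spec (3*m+2) 1); [lia|reflexivity]. Qed.

Lemma c_1 : forall m, c (3*m+4) = (INR m + 1) * (INR m + 4) / 2.
Proof. intro m. unfold c. replace (3*m+4)%nat with (3*(m+1)+1)%nat by lia.
  destruct (divmod3 (m+1) 1 ltac:(lia)) as [E1 E].
  rewrite E, E1. destruct (Nat.eqb_spec (3*(m+1)+1) 1); [lia|]. rewrite plus_INR. simpl. lra. Qed.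

Lemma c_one : c 1 = 1.
Proof. reflexivity. Qed.

Lemma c_ge1 : forall j, 1 <= c j.
Proof. intro j. destruct (Nat.eq_dec j 1). subst. rewrite c_one; lra.
  destruct (divmod3 (j/3) (j mod 3) ltac:(apply Nat.mod_upper_bound; lia)) as [_ _].
  assert (Hj : j = (3*(j/3) + j mod 3)%nat) by (apply Nat.div_mod; lia).
  assert (j mod 3 < 3)%nat by (apply Nat.mod_upper_bound; lia).
  destruct (j mod 3) as [|[|[|r]]] eqn:E; try lia.
  - rewrite Hj, Nat.add_0_r, c_0. lra.
  - assert (1 <= j/3)%nat. { destruct (j/3)%nat; lia. }
    replace j with (3*(j/3 - 1)+4)%nat by lia. rewrite c_1.
    pose proof (pos_INR (j/3-1)). nra.
  - rewrite Hj, c_2. pose proof (pos_INR (j/3)). lra.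
Qed.

Lemma optb_big : forall j k, (5 <= k <= j)%nat -> optb j k = false.
Proof. intros j k H. unfold optb. apply Nat.eqb_neq. intro E.
  pose proof (A_pos j). 
  pose proof (A_super k (j-k)). pose proof (A_big k ltac:(lia)). pose proof (A_pos (j-k)).
  replace (k + (j-k))%nat with j in H1 by lia. nia. Qed.

Lemma optb_per : forall j k, (1 <= k <= 4)%nat -> (k + 2 <= j)%nat -> optb (j+3) k = optb j k.
Proof. intros j k Hk Hj. destruct (opt_period j k Hk Hj) as [E1 E2]. unfold optb.
  rewrite E1, E2. destruct (Nat.eqb_spec (k * A (j-k)) (A j)); destruct (Nat.eqb_spec (3 * (k * A (j - k))) (3 * A j)); lia. Qed.

Lemma optb_perm : forall m r k, (1 <= k <= 4)%nat -> optb (3*m+6+r) k = optb (6+r) k.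
Proof. induction m; intros r k Hk. f_equal; lia.
  replace (3 * S m + 6 + r)%nat with ((3*m+6+r)+3)%nat by lia. rewrite optb_per by lia. auto. Qed.

Lemma seq_split4 : forall j, (4 <= j)%nat -> seq 1 j = 1%nat :: 2%nat :: 3%nat :: 4%nat :: seq 5 (j-4).
Proof. intros. replace j with (4 + (j-4))%nat at 1 by lia. rewrite seq_app. reflexivity. Qed.

Lemma C_id : forall j, (2 <= j)%nat -> c j = sumR (fun k => if optb j k then c (j-k) else 0) (seq 1 j).
Proof.
  intros j Hj.
  destruct (le_lt_dec 6 j) as [H6|H6].
  - rewrite seq_split4 by lia.
    assert (Z : sumR (fun k => if optb j k then c (j-k) else 0) (seq 5 (j-4)) = 0).
    { apply sumR_zero. intros x Hx. apply in_seq in Hx. rewrite optb_big by lia. auto. }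
    unfold sumR in *. simpl. rewrite Z.
    assert (Hmr : exists m r, (r < 3)%nat /\ j = (3 * m + 6 + r)%nat).
    { exists ((j-6)/3)%nat, ((j-6) mod 3)%nat. split. apply Nat.mod_upper_bound; lia.
      pose proof (Nat.div_mod (j-6) 3 ltac:(lia)). lia. }
    destruct Hmr as [m [r [Hr ->]]]. clear Z.
    rewrite !optb_perm by lia.
    destruct r as [|[|[|r]]]; try lia;
    repeat match goal with |- context [optb ?a ?b] => let v := eval vm_compute in (optb a b) in change (optb a b) with v end;
    cbv iota beta.
    + replace (3*m+6+0-3)%nat with (3*(m+1))%nat by lia. replace (3*m+6+0)%nat with (3*(m+2))%nat by lia.
      rewrite !c_0. lra.
    + replace (3*m+6+1-2)%nat with (3*(m+1)+2)%nat by lia.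
      replace (3*m+6+1-3)%nat with (3*m+4)%nat by lia.
      replace (3*m+6+1-4)%nat with (3*(m+1))%nat by lia.
      replace (3*m+6+1)%nat with (3*(m+1)+4)%nat by lia.
      rewrite c_2, !c_1, c_0. rewrite plus_INR. simpl. lra.
    + replace (3*m+6+2-2)%nat with (3*(m+2))%nat by lia.
      replace (3*m+6+2-3)%nat with (3*(m+1)+2)%nat by lia.
      replace (3*m+6+2)%nat with (3*(m+2)+2)%nat by lia.
      rewrite !c_2, c_0. rewrite !plus_INR. simpl. lra.
  - destruct j as [|[|[|[|[|[|j]]]]]]; try lia; unfold sumR; simpl; 
    unfold c; simpl; lra.
Qed.

Open Scope R_scope.

Lemma nth_qlist : forall g m i, (i <= m)%nat -> nth i (qlist g m) 0 = qcoef g (m - i).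
Proof.
  intros g m. induction m; intros i Hi.
  - assert (i = 0%nat) by lia. subst. reflexivity.
  - destruct i. reflexivity. simpl qlist at 1. simpl nth. rewrite IHm by lia. f_equal.
Qed.

Lemma qrec : forall g m, qcoef g (S m) = sumR (fun k => g k * qcoef g (S m - k)) (seq 1 (S m)).
Proof.
  intros g m. unfold qcoef at 1.
  change (qlist g (S m)) with (fold_right Rplus 0 (map (fun k => g k * nth (k-1) (qlist g m) 0) (seq 1 (S m))) :: qlist g m).
  unfold hd, sumR. f_equal. apply map_ext_in. intros k Hk. apply in_seq in Hk.
  rewrite nth_qlist by lia. f_equal. f_equal. lia.
Qed.

Lemma q0 : forall g, qcoef g 0 = 1.
Proof. reflexivity. Qed.

Lemma filt_bound : forall (f : nat -> R) p l M, 0 <= M ->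
  (forall x, In x l -> p x = true -> 0 <= f x <= M) ->
  0 <= fold_right Rplus 0 (map f (filter p l)) <= INR (length l) * M.
Proof.
  intros f p l M HM H. induction l as [|a l IH]. simpl. lra.
  assert (IH' := IH (fun x Hx => H x (or_intror Hx))).
  change (length (a::l)) with (S (length l)).
  rewrite S_INR. cbn [filter]. destruct (p a) eqn:E; cbn [map fold_right].
  - assert (0 <= f a <= M) by (apply H; simpl; auto). nra.
  - nra.
Qed.

Lemma div_half : forall k l, (1 <= l < k)%nat -> (k mod l = 0)%nat -> (2 * l <= k)%nat.
Proof.
  intros k l H E. apply Nat.Div0.mod_divides in E. destruct E as [c Hc].
  destruct c as [|[|c]]; nia.
Qed.

Lemma sigma_bounds : forall d k, (1 <= k)%nat ->
  INR k ^ d <= sigmad d k <= INR k ^ d * (1 + INR k * (/2)^d).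
Proof.
  intros d k Hk. unfold sigmad.
  replace (seq 1 k) with (seq 1 (k-1) ++ k :: nil).
  2:{ replace k with (S (k-1)) at 3 by lia. rewrite seq_S. f_equal. f_equal. lia. }
  rewrite filter_app. simpl filter. rewrite Nat.Div0.mod_same. simpl.
  rewrite map_app, fold_right_app. simpl.
  set (M := (INR k / 2) ^ d).
  assert (HM : 0 <= M). { unfold M. apply pow_le. pose proof (pos_INR k). lra. }
  destruct (filt_bound (fun l => INR l ^ d) (fun l => Nat.eqb (k mod l) 0) (seq 1 (k-1)) M HM) as [B1 B2].
  { intros x Hx Hp. apply in_seq in Hx. apply Nat.eqb_eq in Hp.
    pose proof (div_half k x ltac:(lia) Hp). split. apply pow_le, pos_INR.
    apply pow_incr. split. apply pos_INR. apply le_INR in H. rewrite mult_INR in H. simpl in H. lra. }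
  rewrite length_seq in B2.
  assert (Hsh : forall l0 (a : R), fold_right Rplus a l0 = a + fold_right Rplus 0 l0).
  { induction l0; intros; simpl. lra. rewrite IHl0. lra. }
  rewrite Hsh.
  assert (M = INR k ^ d * (/2)^d). { unfold M. unfold Rdiv. apply Rpow_mult_distr. }
  assert (INR (k-1) <= INR k) by (apply le_INR; lia).
  assert (0 <= INR k ^ d * (/2)^d). { apply Rmult_le_pos; apply pow_le. apply pos_INR. lra. }
  split. lra. nra.
Qed.

Open Scope R_scope.

Definition Sc (j : nat) : R := sumR (fun k => c (j - k)) (seq 1 j).

Lemma sumR_shift : forall f n, sumR f (seq 2 n) = sumR (fun k => f (S k)) (seq 1 n).
Proof. intros. rewrite <- seq_shift. unfold sumR. rewrite map_map. reflexivity. Qed.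

Lemma Sc_S : forall j, Sc (S j) = c j + Sc j.
Proof.
  intro j. unfold Sc. change (seq 1 (S j)) with (1%nat :: seq 2 j). unfold sumR at 1. cbn [map fold_right].
  fold (sumR (fun k => c (S j - k)) (seq 2 j)). rewrite sumR_shift. replace (S j - 1)%nat with j by lia. reflexivity.
Qed.

Lemma c_nonneg : forall j, 0 <= c j.
Proof. intro j. pose proof (c_ge1 j). lra. Qed.

Lemma c_le_Sc : forall j, (1 <= j)%nat -> c j <= Sc j.
Proof.
  intros j Hj. destruct (Nat.eq_dec j 1). subst. unfold Sc, sumR. simpl. rewrite c_one. unfold c. simpl. lra.
  rewrite C_id by lia. unfold Sc. apply sumR_le. intros x Hx. destruct (optb j x). lra. apply c_nonneg.
Qed.

Lemma Sc_bound : forall j, (1 <= j)%nat -> 2 * Sc j <= 2 ^ j.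
Proof.
  induction j; intro Hj. lia.
  destruct (Nat.eq_dec j 0). subst. unfold Sc, sumR. simpl. unfold c. simpl. lra.
  rewrite Sc_S. pose proof (c_le_Sc j ltac:(lia)). specialize (IHj ltac:(lia)). simpl. lra.
Qed.

Lemma G3 : forall j, sumR (fun k => 3 ^ (j - k)) (seq 1 j) = (3 ^ j - 1) / 2.
Proof.
  induction j. unfold sumR. simpl. lra.
  rewrite seq_S. rewrite sumR_app. unfold sumR at 2. cbn [map fold_right].
  replace (S j - (1 + j))%nat with 0%nat by lia.
  rewrite (sumR_ext _ (fun k => 3 * 3 ^ (j - k))).
  rewrite sumR_scal. rewrite IHj. simpl. lra.
  intros x Hx. apply in_seq in Hx. replace (S j - x)%nat with (S (j - x)) by lia. reflexivity.
Qed.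

Lemma G3' : forall j, (1 <= j)%nat ->
  sumR (fun k => if (2 <=? k)%nat then 3 ^ (j - k) else 0) (seq 1 j) = (3 ^ (j-1) - 1) / 2.
Proof.
  intros j Hj. destruct j as [|j]; [lia|]. replace (S j - 1)%nat with j by lia.
  change (seq 1 (S j)) with (1%nat :: seq 2 j).
  unfold sumR at 1. cbn [map fold_right]. change (2 <=? 1)%nat with false. cbv iota beta.
  fold (sumR (fun k => if (2 <=? k)%nat then 3 ^ (S j - k) else 0) (seq 2 j)).
  rewrite sumR_shift. rewrite <- G3. rewrite Rplus_0_l. apply sumR_ext.
  intros x Hx. apply in_seq in Hx. destruct x; [lia|]. simpl. reflexivity.
Qed.

Lemma pow23 : forall j, (2 <= j)%nat -> 9 * 2 ^ j <= 4 * 3 ^ j.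
Proof.
  intros j Hj. induction j. lia. destruct (Nat.eq_dec j 1). subst. simpl. lra.
  specialize (IHj ltac:(lia)). simpl. pose proof (pow_le 2 j ltac:(lra)). lra.
Qed.

Lemma kA_pow : forall d k i, INR k ^ d * INR (A i) ^ d = INR (k * A i) ^ d.
Proof. intros. rewrite mult_INR, Rpow_mult_distr. reflexivity. Qed.

Lemma nonopt_pow : forall d x y, (9 * x <= 8 * y)%nat -> INR x ^ d <= (8/9)^d * INR y ^ d.
Proof.
  intros d x y H. apply le_INR in H. rewrite !mult_INR in H. simpl in H.
  rewrite <- Rpow_mult_distr. apply pow_incr. split. apply pos_INR. pose proof (pos_INR x). lra.
Qed.

Definition qq d j := qcoef (sigmad d) j.
Definition Ad d j := INR (A j) ^ d.

Lemma Ad_pos : forall d j, 0 < Ad d j.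
Proof. intros. unfold Ad. apply pow_lt. pose proof (A_pos j). apply lt_0_INR. lia. Qed.

Theorem main_bounds : forall d N, 
  2 * 3 ^ N * (8/9)^d < 1 -> INR N * (/2)^d <= (8/9)^d / 100 ->
  forall j, (j <= N)%nat ->
  c j * Ad d j <= qq d j <= (c j + /2 * 3 ^ j * (8/9)^d) * Ad d j.
Proof.
  intros d N Hr Ht. set (rho := (8/9)^d) in *. set (tau := INR N * (/2)^d) in *.
  assert (Hrho : 0 < rho) by (apply pow_lt; lra).
  assert (Htau : 0 <= tau). { unfold tau. apply Rmult_le_pos. apply pos_INR. apply pow_le. lra. }
  intro j. induction j as [j IH] using lt_wf_ind. intro HjN.
  destruct j as [|j].
  { unfold qq, Ad. rewrite q0. change (c 0) with 1. change (A 0) with 1%nat. simpl INR. rewrite pow1.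
    assert (0 <= /2 * 1 * rho) by lra. simpl. lra. }
  unfold qq in *. rewrite qrec.
  destruct (Nat.eq_dec j 0) as [->|Hj0].
  { unfold sumR. simpl. unfold qq. rewrite q0. unfold Ad. simpl. rewrite c_one.
    assert (sigmad d 1 = 1). { unfold sigmad. simpl. rewrite pow1. lra. }
    rewrite H, pow1. assert (0 <= /2 * 3 * rho) by lra. lra. }
  set (J := S j) in *.
  assert (HJ : (2 <= J)%nat) by (unfold J; lia).
  assert (Hsig : forall k, (1 <= k <= J)%nat ->
     INR k ^ d <= sigmad d k <= INR k ^ d * (1 + tau)).
  { intros k Hk. destruct (sigma_bounds d k ltac:(lia)) as [S1 S2]. split. auto.
    eapply Rle_trans. apply S2. apply Rmult_le_compat_l. apply pow_le, pos_INR.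
    assert (INR k <= INR N) by (apply le_INR; lia).
    assert (0 <= (/2)^d) by (apply pow_le; lra). unfold tau. nra. }
  split.
  -
    rewrite (C_id J HJ). rewrite Rmult_comm. rewrite <- sumR_scal.
    apply sumR_le. intros k Hk. apply in_seq in Hk.
    destruct (IH (J - k)%nat ltac:(lia) ltac:(lia)) as [L U].
    destruct (Hsig k ltac:(lia)) as [S1 S2].
    pose proof (Ad_pos d (J-k)). pose proof (c_nonneg (J-k)).
    destruct (optb J k) eqn:E.
    + unfold optb in E. apply Nat.eqb_eq in E.
      unfold Ad. rewrite <- E. rewrite <- kA_pow. fold (Ad d (J-k)).
      assert (0 <= INR k ^ d) by (apply pow_le, pos_INR).
      assert (0 <= c (J-k) * Ad d (J-k)) by nra.
      nra.
    + rewrite Rmult_0_r. assert (0 <= INR k ^ d) by (apply pow_le, pos_INR).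
      assert (0 <= c (J-k) * Ad d (J-k)) by nra. apply Rmult_le_pos; lra.
  -
    set (h := fun k => /2 * rho * (if (2 <=? k)%nat then 3 ^ (J - k) else 0)
                      + rho * c (J - k) + /2 * rho ^ 2 * 3 ^ (J - k)).
    apply Rle_trans with (sumR (fun k => (1 + tau) * Ad d J * ((if optb J k then c (J-k) else 0) + h k)) (seq 1 J)).
    + apply sumR_le. intros k Hk. apply in_seq in Hk.
      destruct (IH (J - k)%nat ltac:(lia) ltac:(lia)) as [L U].
      destruct (Hsig k ltac:(lia)) as [S1 S2].
      pose proof (Ad_pos d (J-k)). pose proof (c_nonneg (J-k)). pose proof (Ad_pos d J).
      assert (P3 : 0 <= 3 ^ (J - k)) by (apply pow_le; lra).
      assert (Hk0 : 0 <= INR k ^ d) by (apply pow_le, pos_INR).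
      set (e := /2 * 3 ^ (J - k) * rho) in *.
      assert (He : 0 <= e) by (unfold e; nra).
      assert (Hq0 : 0 <= qcoef (sigmad d) (J - k)) by nra.
      assert (T1 : sigmad d k * qcoef (sigmad d) (J-k) <= (1 + tau) * (c (J-k) + e) * (INR k ^ d * Ad d (J-k))).
      { apply Rle_trans with (INR k ^ d * (1 + tau) * qcoef (sigmad d) (J-k)). apply Rmult_le_compat_r; lra.
        replace ((1 + tau) * (c (J-k) + e) * (INR k ^ d * Ad d (J-k))) with
                (INR k ^ d * (1 + tau) * ((c (J-k) + e) * Ad d (J-k))) by ring.
        apply Rmult_le_compat_l. nra. lra. }
      unfold Ad in T1. rewrite kA_pow in T1.
      assert (Hh1 : 0 <= /2 * rho * (if (2 <=? k)%nat then 3 ^ (J - k) else 0)).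
      { destruct (2 <=? k)%nat; nra. }
      destruct (optb J k) eqn:E.
      * pose proof (opt_ge2 J k HJ ltac:(lia) E) as Hk2.
        unfold optb in E. apply Nat.eqb_eq in E. rewrite E in T1. fold (Ad d J) in T1.
        assert (Hh : e <= h k).
        { unfold h. apply Nat.leb_le in Hk2. rewrite Hk2. unfold e.
          assert (0 <= rho * c (J-k)) by nra. assert (0 <= /2 * rho^2 * 3^(J-k)) by (apply Rmult_le_pos; nra). nra. }
        eapply Rle_trans; [apply T1|].
        replace ((1 + tau) * (c (J - k) + e) * Ad d J) with ((1 + tau) * Ad d J * (c (J - k) + e)) by ring.
        apply Rmult_le_compat_l. apply Rmult_le_pos; lra. lra.
      * destruct (F2 J k ltac:(lia)) as [E2|E2].
        { unfold optb in E. rewrite E2, Nat.eqb_refl in E. discriminate. }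
        pose proof (nonopt_pow d _ _ E2) as NP. fold rho in NP. fold (Ad d J) in NP.
        assert (Hh : rho * (c (J-k) + e) <= h k).
        { unfold h, e. nra. }
        assert (0 <= (1 + tau) * (c (J-k) + e)) by nra.
        assert (T2 : (1 + tau) * (c (J-k) + e) * INR (k * A (J - k)) ^ d <= (1 + tau) * (c (J-k) + e) * (rho * Ad d J)).
        { apply Rmult_le_compat_l; auto. }
        eapply Rle_trans; [apply T1|]. eapply Rle_trans; [apply T2|].
        replace ((1 + tau) * (c (J - k) + e) * (rho * Ad d J)) with ((1 + tau) * Ad d J * (rho * (c (J - k) + e))) by ring.
        rewrite Rplus_0_l. apply Rmult_le_compat_l. apply Rmult_le_pos; lra. lra.
    + rewrite sumR_scal. rewrite sumR_plus. rewrite <- C_id by auto.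
      unfold h. rewrite !sumR_plus, !sumR_scal. rewrite G3, G3' by lia. fold (Sc J).
      assert (HS := Sc_bound J ltac:(lia)). assert (HcS := c_le_Sc J ltac:(lia)).
      assert (H23 := pow23 J HJ).
      assert (H3N : 3 ^ J <= 3 ^ N) by (apply Rle_pow; lra || lia).
      assert (H3J : 3 ^ J = 3 * 3 ^ (J - 1)). { replace J with (S (J-1)) at 1 by lia. reflexivity. }
      set (X := 3 ^ J) in *. set (Y := 2 ^ J) in *. set (Z := 3 ^ (J-1)) in *.
      pose proof (Ad_pos d J). set (a := Ad d J) in *.
      pose proof (c_ge1 J).
      assert (HX9 : 9 <= X). { unfold X. replace J with (2 + (J-2))%nat by lia. rewrite pow_add.
        assert (1 <= 3 ^ (J-2)) by (apply pow_R1_Rle; lra). replace (3^2) with 9 by (simpl; ring). nra. }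
      assert (HrX : 2 * X * rho <= 1) by nra.
      set (HH' := /2 * rho * ((Z - 1) / 2) + rho * Sc J + /2 * rho ^ 2 * ((X - 1) / 2)).
      assert (HH : HH' <= rho * X * (23/72)).
      { unfold HH'. assert (rho * Sc J <= rho * (2 * X / 9)) by nra.
        assert (rho ^ 2 * X <= rho * (X / 18)).
        { replace (rho ^ 2 * X) with (rho * (rho * X)) by ring. apply Rmult_le_compat_l; lra. } nra. }
      assert (HH0 : 0 <= HH'). { unfold HH'. pose proof (Sc_bound J). assert (1 <= Z). unfold Z. apply pow_R1_Rle; lra.
        assert (0 <= Sc J) by (pose proof (c_ge1 J); lra). assert (0 <= rho^2) by nra. nra. }
      assert (Tc : tau * c J <= rho * X / 450) by nra.
      assert (TH : tau * HH' <= rho * X / 1000).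
      { apply Rle_trans with (rho / 100 * (rho * X * (23/72))). apply Rmult_le_compat; nra. nra. }
      replace (/2 * (rho * ((Z - 1) / 2))) with (/2 * rho * ((Z - 1) / 2)) by ring.
      replace (/2 * (rho ^ 2 * ((X - 1) / 2))) with (/2 * rho ^ 2 * ((X - 1) / 2)) by ring.
      fold HH'. 
      assert ((1 + tau) * a * (c J + HH') = a * (c J + tau * c J + HH' + tau * HH')) by ring.
      rewrite H1. rewrite Rmult_comm. apply Rmult_le_compat_r. lra. nra.
Qed.

Open Scope R_scope.

Lemma L98_pos : 0 < ln (9/8).
Proof. rewrite <- ln_1. apply ln_increasing; lra. Qed.

Lemma from_ln : forall X d, 0 < X -> ln X < INR d * ln (9/8) -> X < (9/8)^d.
Proof. intros X d HX H. apply ln_lt_inv; auto. apply pow_lt; lra. rewrite ln_pow by lra. lra. Qed.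

Lemma div_lt : forall y d, y / ln (9/8) < INR d -> y < INR d * ln (9/8).
Proof. intros y d H. pose proof L98_pos.
  apply (Rmult_lt_compat_r (ln (9/8))) in H; auto. unfold Rdiv in H.
  rewrite Rmult_assoc, Rinv_l in H by lra. lra. Qed.

Lemma pow3_ge : forall k, INR k + 1 <= 3 ^ k.
Proof. induction k. simpl. lra. rewrite S_INR. simpl. pose proof (pos_INR k). lra. Qed.

Lemma rhoW : forall d, (8/9)^d * (9/8)^d = 1.
Proof. intro d. rewrite <- Rpow_mult_distr. replace (8/9*(9/8)) with 1 by field. apply pow1. Qed.

Lemma pow_nat : forall x k, INR (x ^ k) = INR x ^ k.
Proof. intros. induction k. reflexivity. simpl. rewrite mult_INR, IHk. reflexivity. Qed.

Lemma D_bounds : forall n d m, n = (3 * m + 3)%nat -> Dsigma n < INR d -> 3 ^ (2 * n) < (9/8)^d.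
Proof.
  intros n d m Hn HD. unfold Dsigma in HD.
  destruct (divmod3 (m+1) 0 ltac:(lia)) as [_ E]. replace (3*(m+1)+0)%nat with n in E by lia.
  rewrite E in HD. simpl in HD. apply from_ln. apply pow_lt; lra.
  rewrite ln_pow by lra. apply div_lt. unfold log98 in HD. rewrite mult_INR. replace (INR 2) with 2 by (simpl; lra). try replace (INR 1) with 1 by (simpl; lra).
  replace (2 * INR n * ln 3 / ln (9/8)) with (2 * INR n * (ln 3 / ln (9/8))) by (field; pose proof L98_pos; lra). auto.
Qed.

Lemma D_bounds1 : forall n d m, n = (3 * m + 4)%nat -> Dsigma n < INR d -> 3 ^ (2 * n + 1) < (INR n + 2) * (9/8)^d.
Proof.
  intros n d m Hn HD. unfold Dsigma in HD.
  destruct (divmod3 (m+1) 1 ltac:(lia)) as [_ E]. replace (3*(m+1)+1)%nat with n in E by lia.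
  rewrite E in HD. simpl in HD. pose proof (pos_INR n). pose proof L98_pos.
  apply ln_lt_inv. apply pow_lt; lra. apply Rmult_lt_0_compat. lra. apply pow_lt; lra.
  rewrite ln_mult by (lra || (apply pow_lt; lra)). rewrite !ln_pow by lra.
  unfold log98 in HD. rewrite plus_INR, mult_INR. replace (INR 2) with 2 by (simpl; lra). try replace (INR 1) with 1 by (simpl; lra).
  assert (((2 * INR n + 1) * ln 3 - ln (INR n + 2)) / ln (9/8) < INR d).
  { replace (((2 * INR n + 1) * ln 3 - ln (INR n + 2)) / ln (9/8)) with
      ((2 * INR n + 1) * (ln 3 / ln (9 / 8)) - ln (INR n + 2) / ln (9 / 8)) by (field; lra). auto. }
  apply div_lt in H1. lra.
Qed.

Lemma D_bounds2 : forall n d m, n = (3 * m + 5)%nat -> Dsigma n < INR d -> 2 * 3 ^ (n + 1) < (9/8)^d.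
Proof.
  intros n d m Hn HD. unfold Dsigma in HD.
  destruct (divmod3 (m+1) 2 ltac:(lia)) as [_ E]. replace (3*(m+1)+2)%nat with n in E by lia.
  rewrite E in HD. simpl in HD. pose proof (pos_INR n). pose proof L98_pos.
  destruct (Nat.eqb_spec n 5).
  - subst n. assert (m = 0%nat) by lia. subst m.
    assert (3888 < (9/8)^d).
    { apply from_ln. lra. apply div_lt. unfold log98 in HD. auto. }
    simpl. lra.
  - apply from_ln. apply Rmult_lt_0_compat. lra. apply pow_lt; lra.
    rewrite ln_mult by (lra || (apply pow_lt; lra)). rewrite !ln_pow by lra.
    apply div_lt. unfold log98 in HD. rewrite plus_INR. replace (INR 2) with 2 by (simpl; lra). try replace (INR 1) with 1 by (simpl; lra).
    replace ((ln 2 + (INR n + 1) * ln 3) / ln (9 / 8)) with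
      (ln 2 / ln (9 / 8) + (INR n + 1) * (ln 3 / ln (9 / 8))) by (field; lra). auto.
Qed.

Open Scope R_scope.

Lemma Aid : forall d p s x y z, (p * A x * A x = s * A y * A z)%nat ->
  INR p ^ d * (Ad d x * Ad d x) = INR s ^ d * (Ad d y * Ad d z).
Proof. intros. unfold Ad. rewrite <- !Rpow_mult_distr. rewrite <- !mult_INR.
  rewrite !Nat.mul_assoc. rewrite H. reflexivity. Qed.

Lemma r89 : forall d, (8/9)^d * 9 ^ d = 8 ^ d.
Proof. intro. rewrite <- Rpow_mult_distr. f_equal. field. Qed.

Lemma ratio_iff : forall x y z, 0 < x -> 0 < z -> (y ^ 2 / (x * z) < 1 <-> y ^ 2 < x * z).
Proof. intros x y z Hx Hz. assert (0 < x * z) by nra. split; intro H1.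
  - apply (Rmult_lt_compat_r (x*z)) in H1; auto. unfold Rdiv in H1. rewrite Rmult_assoc, Rinv_l in H1 by lra. lra.
  - apply (Rmult_lt_reg_r (x*z)); auto. unfold Rdiv. rewrite Rmult_assoc, Rinv_l by lra. lra. Qed.

Lemma ratio_ge : forall x y z, 0 < x -> 0 < z -> x * z <= y ^ 2 -> ~ (y ^ 2 / (x * z) < 1).
Proof. intros x y z Hx Hz H1 H2. apply ratio_iff in H2; auto. lra. Qed.

Lemma pow_m3 : forall m, 3 ^ (3 * m) = (3 ^ m) ^ 3.
Proof. intro. rewrite <- pow_mult. f_equal. lia. Qed.
Lemma pow_m4 : forall m, 3 ^ (4 * m) = (3 ^ m) ^ 4.
Proof. intro. rewrite <- pow_mult. f_equal. lia. Qed.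

Theorem corollary2 (n d : nat) :
  (3 <= n)%nat ->
  Dsigma n < INR d ->
  (qcoef (sigmad d) n ^ 2 / (qcoef (sigmad d) (n - 1) * qcoef (sigmad d) (n + 1)) < 1
   <-> (n mod 3 = 1)%nat).
Proof.
  intros Hn HD.
  set (W := (9/8)^d). set (rho := (8/9)^d).
  assert (HrW : rho * W = 1) by apply rhoW.
  assert (HW0 : 0 < W) by (apply pow_lt; lra).
  assert (Hrho0 : 0 < rho) by (apply pow_lt; lra).
  assert (Hmr : exists m r, (r < 3)%nat /\ n = (3 * m + 3 + r)%nat).
  { exists ((n-3)/3)%nat, ((n-3) mod 3)%nat. split. apply Nat.mod_upper_bound; lia.
    pose proof (Nat.div_mod (n-3) 3 ltac:(lia)). lia. }
  destruct Hmr as [m [r [Hr Hnm]]].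
  assert (H3n : 3 ^ (n + 1) = 9 * 3 ^ (n - 1)).
  { replace (n+1)%nat with (2 + (n-1))%nat by lia. rewrite pow_add. simpl. ring. }
  assert (P3 : 1 <= 3 ^ (n - 1)) by (apply pow_R1_Rle; lra).
  assert (HW : 2 * 3 ^ (n + 1) < W).
  { destruct r as [|[|[|r]]]; try lia.
    - pose proof (D_bounds n d m ltac:(lia) HD). fold W in H.
      assert (3 ^ (2 * n) = 3 ^ (n + 1) * 3 ^ (n - 1)) by (rewrite <- pow_add; f_equal; lia).
      assert (9 <= 3 ^ (n - 1)).
      { replace (n-1)%nat with (2 + (n-3))%nat by lia. rewrite pow_add.
        pose proof (pow_R1_Rle 3 (n-3) ltac:(lra)). simpl. lra. }
      assert (0 < 3 ^ (n+1)) by (apply pow_lt; lra). nra.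
    - pose proof (D_bounds1 n d m ltac:(lia) HD). fold W in H.
      assert (3 ^ (2 * n + 1) = 3 ^ (n + 1) * 3 ^ n) by (rewrite <- pow_add; f_equal; lia).
      assert (2 * (INR n + 2) <= 3 ^ n).
      { replace n with (2 + (n-2))%nat at 2 by lia. rewrite pow_add.
        pose proof (pow3_ge (n-2)). rewrite minus_INR in H1 by lia. simpl. simpl in H1. pose proof (pos_INR n).
        assert (3 <= INR n) by (replace 3 with (INR 3) by (simpl; lra); apply le_INR; lia). lra. }
      assert (0 < 3 ^ (n+1)) by (apply pow_lt; lra). pose proof (pos_INR n). nra.
    - apply (D_bounds2 n d m ltac:(lia) HD). }
  assert (Hr1 : 2 * 3 ^ (n + 1) * rho < 1).
  { apply (Rmult_lt_compat_r rho) in HW; auto. lra. }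
  assert (Ht : INR (n + 1) * (/2)^d <= rho / 100).
  { assert (E1 : (/2)^d * (16/9)^d = rho). { rewrite <- Rpow_mult_distr. unfold rho. f_equal. field. }
    assert (E2 : W ^ 4 <= (16/9)^d).
    { unfold W. rewrite <- pow_mult. rewrite Nat.mul_comm. rewrite pow_mult. apply pow_incr. split.
      apply pow_le; lra. simpl. lra. }
    assert (HN : INR (n + 1) + 1 <= 3 ^ (n + 1)) by apply pow3_ge.
    assert (H81 : 81 <= 3 ^ (n + 1)).
    { replace (n+1)%nat with (4 + (n-3))%nat by lia. rewrite pow_add.
      pose proof (pow_R1_Rle 3 (n-3) ltac:(lra)). simpl. lra. }
    assert (W ^ 2 <= W ^ 4). { assert (1 <= W) by lra. assert (1 <= W^2) by (simpl; nra). replace (W^4) with (W^2*W^2) by ring. nra. }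
    assert (100 * INR (n + 1) <= W ^ 2). { simpl. pose proof (pos_INR (n+1)). nra. }
    assert (0 < (/2)^d) by (apply pow_lt; lra).
    assert (100 * INR (n+1) * (/2)^d <= (16/9)^d * (/2)^d) by (apply Rmult_le_compat_r; lra).
    lra. }
  assert (MB := main_bounds d (n+1) Hr1 Ht).
  destruct (MB (n-1)%nat ltac:(lia)) as [La Ua].
  destruct (MB n ltac:(lia)) as [Lb Ub].
  destruct (MB (n+1)%nat ltac:(lia)) as [Le Ue].
  change ((8/9)^d) with rho in Ua, Ub, Ue. unfold qq in La, Ua, Lb, Ub, Le, Ue.
  pose proof (Ad_pos d (n-1)). pose proof (Ad_pos d n). pose proof (Ad_pos d (n+1)).
  pose proof (c_ge1 (n-1)). pose proof (c_ge1 n). pose proof (c_ge1 (n+1)).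
  set (a := Ad d (n-1)) in *. set (b := Ad d n) in *. set (e := Ad d (n+1)) in *.
  set (qa := qcoef (sigmad d) (n-1)) in *. set (qb := qcoef (sigmad d) n) in *.
  set (qe := qcoef (sigmad d) (n+1)) in *.
  assert (Hqa : 0 < qa) by nra. assert (Hqe : 0 < qe) by nra. assert (Hqb : 0 < qb) by nra.
  set (ea := /2 * 3 ^ (n-1) * rho) in *. set (eb := /2 * 3 ^ n * rho) in *. set (ee := /2 * 3 ^ (n+1) * rho) in *.
  assert (Hee : 0 <= ee < 1/4) by (unfold ee; nra).
  assert (Hea : 0 <= ea <= 1/36) by (unfold ea; unfold ee in Hee; rewrite H3n in Hee; nra).
  assert (Heb : 0 <= eb < 1/4).
  { unfold eb. assert (3 ^ n <= 3 ^ (n+1)) by (apply Rle_pow; lra || lia). pose proof (pow_lt 3 n ltac:(lra)). nra. }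
  destruct r as [|[|[|r]]]; try lia.
  -
    assert (Hmod : (n mod 3 = 0)%nat). { destruct (divmod3 (m+1) 0 ltac:(lia)) as [_ Em]. replace n with (3*(m+1)+0)%nat by lia. exact Em. }
    rewrite Hmod. split; [|discriminate]. intro Hlt. exfalso. revert Hlt. apply ratio_ge; auto.
    pose proof (D_bounds n d m ltac:(lia) HD) as HD0. fold W in HD0.
    assert (Hid : (8 * A n * A n = 9 * A (n-1) * A (n+1))%nat).
    { replace n with (3*(m+1))%nat by lia. replace (3*(m+1)-1)%nat with (3*m+2)%nat by lia.
      replace (3*(m+1)+1)%nat with (3*m+4)%nat by lia. rewrite A_3m, A_3m2, A_3m4. rewrite !Nat.pow_add_r. cbn [Nat.pow]. ring. }
    pose proof (Aid d _ _ _ _ _ Hid) as HA. fold a b e in HA.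
    replace (INR 8) with 8 in HA by (simpl; lra). replace (INR 9) with 9 in HA by (simpl; lra).
    assert (Hae : a * e = rho * (b * b)).
    { pose proof (r89 d) as R89. fold rho in R89. pose proof (pow_lt 9 d ltac:(lra)).
      apply (Rmult_eq_reg_l (9^d)); [|lra]. rewrite <- HA. rewrite <- R89. ring. }
    replace (n-1)%nat with (3*m+2)%nat in * by lia. replace (n+1)%nat with (3*m+4)%nat in * by lia.
    rewrite c_2 in Ua. rewrite c_1 in Ue. replace n with (3*(m+1))%nat in Lb by lia. rewrite c_0 in Lb.
    set (u := INR m) in *. pose proof (pos_INR m) as Hu. fold u in Hu.
    set (T := 3 ^ m).
    assert (HT : u + 1 <= T) by apply pow3_ge.
    assert (HT3 : 27 * T ^ 3 <= 3 ^ (2 * n)).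
    { unfold T. rewrite <- pow_m3. replace 27 with (3^3) by (simpl; lra). rewrite <- pow_add. apply Rle_pow; lra || lia. }
    assert (K1 : (u + 1 + ea) * ((u + 1) * (u + 4) / 2 + ee) <= 6 * T ^ 3).
    { assert (u + 1 + ea <= 2 * T) by lra.
      assert ((u + 1) * (u + 4) / 2 + ee <= 3 * T ^ 2) by (simpl; nra).
      assert (0 <= u + 1 + ea) by lra. assert (0 <= (u+1)*(u+4)/2 + ee) by nra.
      replace (6 * T ^ 3) with ((2 * T) * (3 * T ^ 2)) by ring. apply Rmult_le_compat; auto. }
    assert (Kr : (u + 1 + ea) * ((u + 1) * (u + 4) / 2 + ee) * rho <= 1).
    { assert (rho * 3 ^ (2*n) < 1) by (apply (Rmult_lt_compat_l rho) in HD0; lra). nra. }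
    assert (Qae : qa * qe <= (u + 1 + ea) * ((u + 1) * (u + 4) / 2 + ee) * (a * e)).
    { assert (0 <= qa) by lra. assert (0 <= qe) by lra.
      replace ((u + 1 + ea) * ((u + 1) * (u + 4) / 2 + ee) * (a * e)) with (((u + 1 + ea) * a) * (((u + 1) * (u + 4) / 2 + ee) * e)) by ring.
      apply Rmult_le_compat; auto. }
    rewrite Hae in Qae. simpl. assert (b <= qb) by lra.
    assert (b * b <= qb * qb) by nra.
    assert (0 <= b * b) by nra.
    assert ((u + 1 + ea) * ((u + 1) * (u + 4) / 2 + ee) * (rho * (b * b)) <= 1 * (b*b)).
    { replace ((u + 1 + ea) * ((u + 1) * (u + 4) / 2 + ee) * (rho * (b * b))) with (((u + 1 + ea) * ((u + 1) * (u + 4) / 2 + ee) * rho) * (b*b)) by ring.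
      apply Rmult_le_compat_r; lra. }
    lra.
  -
    assert (Hmod : (n mod 3 = 1)%nat). { destruct (divmod3 (m+1) 1 ltac:(lia)) as [_ Em]. replace n with (3*(m+1)+1)%nat by lia. exact Em. }
    rewrite Hmod. split; [auto|]. intros _. apply ratio_iff; auto.
    pose proof (D_bounds1 n d m ltac:(lia) HD) as HD1. fold W in HD1.
    assert (Hid : (9 * A n * A n = 8 * A (n-1) * A (n+1))%nat).
    { replace n with (3*m+4)%nat by lia. replace (3*m+4-1)%nat with (3*(m+1))%nat by lia.
      replace (3*m+4+1)%nat with (3*(m+1)+2)%nat by lia. rewrite A_3m, A_3m2, A_3m4. rewrite !Nat.pow_add_r. cbn [Nat.pow]. ring. }
    pose proof (Aid d _ _ _ _ _ Hid) as HA. fold a b e in HA.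
    replace (INR 8) with 8 in HA by (simpl; lra). replace (INR 9) with 9 in HA by (simpl; lra).
    assert (Hbb : b * b = rho * (a * e)).
    { pose proof (r89 d) as R89. fold rho in R89. pose proof (pow_lt 9 d ltac:(lra)).
      apply (Rmult_eq_reg_l (9^d)); [|lra]. rewrite HA. rewrite <- R89. ring. }
    replace (n-1)%nat with (3*(m+1))%nat in * by lia. replace (n+1)%nat with (3*(m+1)+2)%nat in * by lia.
    rewrite c_0 in La. rewrite c_2 in Le. replace n with (3*m+4)%nat in Ub by lia. rewrite c_1 in Ub.
    rewrite plus_INR in Le. replace (INR 1) with 1 in Le by reflexivity.
    set (u := INR m) in *. pose proof (pos_INR m) as Hu. fold u in Hu.
    set (T := 3 ^ (m+1)).
    assert (HT : u + 2 <= T). { pose proof (pow3_ge (m+1)) as P. rewrite plus_INR in P. simpl in P. unfold T. fold u in P. lra. }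
    assert (HT4 : 3 * T ^ 4 <= 3 ^ (2 * n + 1)).
    { unfold T. rewrite <- pow_m4. replace (3 * 3 ^ (4 * (m+1))) with (3 ^ (1 + 4*(m+1))) by (simpl; ring).
      apply Rle_pow; lra || lia. }
    assert (Hn2 : INR n + 2 = 3 * (u + 2)). { rewrite Hnm. rewrite !plus_INR, mult_INR. fold u. simpl. lra. }
    rewrite Hn2 in HD1.
    assert (R1 : rho * T ^ 4 < u + 2).
    { assert (rho * 3 ^ (2*n+1) < 3 * (u+2)).
      { apply (Rmult_lt_compat_l rho) in HD1; auto. replace (rho * (3 * (u + 2) * W)) with (3 * (u+2) * (rho * W)) in HD1 by ring. rewrite HrW in HD1. lra. }
      nra. }
    assert (K : (u + 1) * (u + 4) / 2 + eb <= T ^ 2) by (simpl; nra).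
    assert (K2 : ((u + 1) * (u + 4) / 2 + eb) ^ 2 <= T ^ 4).
    { replace (T^4) with ((T^2)^2) by ring. apply pow_incr. split; nra. }
    assert (Qb : qb ^ 2 <= ((u + 1) * (u + 4) / 2 + eb) ^ 2 * (b * b)).
    { replace (((u + 1) * (u + 4) / 2 + eb) ^ 2 * (b * b)) with ((((u + 1) * (u + 4) / 2 + eb) * b) ^ 2) by ring.
      apply pow_incr. lra. }
    rewrite Hbb in Qb.
    assert (((u + 1) * (u + 4) / 2 + eb) ^ 2 * rho <= T ^ 4 * rho) by (apply Rmult_le_compat_r; lra).
    assert (0 < a * e) by nra.
    assert (qa * qe >= a * ((u + 1 + 1) * e)).
    { assert (a <= qa) by lra. assert (0 <= (u + 1 + 1) * e) by nra. nra. }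
    nra.
  -
    assert (Hmod : (n mod 3 = 2)%nat). { destruct (divmod3 (m+1) 2 ltac:(lia)) as [_ Em]. replace n with (3*(m+1)+2)%nat by lia. exact Em. }
    rewrite Hmod. split; [|discriminate]. intro Hlt. exfalso. revert Hlt. apply ratio_ge; auto.
    assert (Hid : (1 * A n * A n = 1 * A (n-1) * A (n+1))%nat).
    { replace n with (3*(m+1)+2)%nat by lia. replace (3*(m+1)+2-1)%nat with (3*m+4)%nat by lia.
      replace (3*(m+1)+2+1)%nat with (3*(m+2))%nat by lia. rewrite A_3m, A_3m2, A_3m4.
      rewrite !Nat.pow_add_r. cbn [Nat.pow]. ring. }
    pose proof (Aid d _ _ _ _ _ Hid) as HA. fold a b e in HA.
    replace (INR 1) with 1 in HA by reflexivity. rewrite pow1 in HA.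
    replace (n-1)%nat with (3*m+4)%nat in * by lia. replace (n+1)%nat with (3*(m+2))%nat in * by lia.
    rewrite c_1 in Ua. rewrite c_0 in Ue. replace n with (3*(m+1)+2)%nat in Lb by lia. rewrite c_2 in Lb.
    rewrite plus_INR in Lb. replace (INR 1) with 1 in Lb by reflexivity.
    set (u := INR m) in *. pose proof (pos_INR m) as Hu. fold u in Hu.
    assert (qa * qe <= ((u + 1) * (u + 4) / 2 + ea) * (1 + ee) * (a * e)).
    { assert (0 <= qa) by lra. assert (0 <= qe) by lra.
      replace (((u + 1) * (u + 4) / 2 + ea) * (1 + ee) * (a * e)) with ((((u + 1) * (u + 4) / 2 + ea) * a) * ((1 + ee) * e)) by ring.
      apply Rmult_le_compat; auto. }
    assert (((u + 1) * (u + 4) / 2 + ea) * (1 + ee) <= (u + 1 + 1) ^ 2) by (simpl; nra).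
    assert (0 < a * e) by nra.
    assert (((u + 1) * (u + 4) / 2 + ea) * (1 + ee) * (a * e) <= (u+1+1)^2 * (a * e)) by (apply Rmult_le_compat_r; lra).
    assert ((u + 1 + 1) * b <= qb) by lra.
    assert (((u + 1 + 1) * b) ^ 2 <= qb ^ 2) by (apply pow_incr; nra).
    assert (HA' : b * b = a * e) by lra. assert (((u + 1 + 1) * b) ^ 2 = (u+1+1)^2 * (a * e)) by (rewrite <- HA'; ring).
    lra.
Qed.
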